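(* Let $\{\Phi_\theta\}_{\theta\in\mathbb R}$ be a differentiable family of channels between finite-dimensional spaces, $\Delta_\theta=\mathrm d\Phi_\theta/\mathrm d\theta$, and fix $\theta_0$. For every asymptotically unbiased adaptive estimator $\{(\mathcal K_n,\rho^n,\boldsymbol\Psi^n,M^n)\}_{n\ge1}$ with estimates $\hat\theta^n$, \[ \liminf_{n\to\infty} n\,\mathbb E_{\theta_0}\big(\hat\theta^n-\theta_0\big)^2\ \ge\ \big(G^{\min,a}_{\Phi_{\theta_0}}(\Delta_{\theta_0})\big)^{-1}. \]
   Context: A channel is a CPTP linear map; $J_p(\delta)=\sum_y\delta(y)^2/p(y)$ for $p$ a probability distribution on a finite set and real $\delta$ with $\sum\delta=0$. An $n$-step adaptive strategy for channels from $\mathcal H_{\rm in}$ to $\mathcal H_{\rm out}$ is $(\mathcal K,\rho,\boldsymbol\Psi^n)$ with $\mathcal K$ a finite-dimensional auxiliary space, $\rho$ a state on $\mathcal H_{\rm in}\otimes\mathcal K$, $\Psi_1$ a channel on $\mathcal H_{\rm in}\otimes\mathcal K$ and $\Psi_k$ ($2\le k\le n$) channels from $\mathcal H_{\rm out}\otimes\mathcal K$ to $\mathcal H_{\rm in}\otimes\mathcal K$; $\Phi^{\#n}(\boldsymbol\Psi^n):=((\Phi\otimes\mathbf I)\circ\Psi_n)\circ\cdots\circ((\Phi\otimes\mathbf I)\circ\Psi_1)$, and $\Delta^{(\#n)}(\boldsymbol\Psi^n)$ is the sum over $j$ of the same composition with the $j$-th factor $\Phi\otimes\mathbf I$ replaced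 by $\Delta\otimes\mathbf I$. $G^{\min,a}_\Phi(\Delta):=\lim_n\frac1n\sup J_{M(\Phi^{\#n}(\boldsymbol\Psi^n)(\rho))}\big(M(\Delta^{(\#n)}(\boldsymbol\Psi^n)(\rho))\big)$, the supremum over $n$-step adaptive strategies and POVMs $M$ (finitely many outcomes) on $\mathcal H_{\rm out}\otimes\mathcal K$. An adaptive estimator is a sequence $(\mathcal K_n,\rho^n,\boldsymbol\Psi^n,M^n)$ where $(\mathcal K_n,\rho^n,\boldsymbol\Psi^n)$ is an $n$-step adaptive strategy and $M^n$ is a POVM on $\mathcal H_{\rm out}\otimes\mathcal K_n$ with finitely many real outcomes; the estimate $\hat\theta^n$ is the outcome, distributed according to $M^n(\Phi_\theta^{\#n}(\boldsymbol\Psi^n)(\rho^n))$, and $\mathbb E_\theta$ denotes expectation under this distribution. It is asymptotically unbiased if $\lim_n\mathbb E_\theta[\hat\theta^n]=\theta$ and $\lim_n\frac{\mathrm d}{\mathrm d\theta}\mathbb E_\theta[\hat\theta^n]=1$ for all $\theta$. *)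

(* Defs.v *)
From Stdlib Require Import Reals List.
Open Scope R_scope.

Record C : Type := mkC { Cre : R ; Cim : R }.
Definition C0 : C := mkC 0 0.
Definition C1 : C := mkC 1 0.
Definition Cadd (a b : C) : C := mkC (Cre a + Cre b) (Cim a + Cim b).
Definition Cmul (a b : C) : C :=
  mkC (Cre a * Cre b - Cim a * Cim b) (Cre a * Cim b + Cim a * Cre b).
Definition Cconj (a : C) : C := mkC (Cre a) (- Cim a).

Fixpoint csum (n : nat) (f : nat -> C) : C :=
  match n with O => C0 | S m => Cadd (csum m f) (f m) end.
Fixpoint rsum_list (l : list R) : R :=
  match l with nil => 0 | x :: l' => x + rsum_list l' end.

(* ---------- matrices and superoperators ----------
   A d x d matrix is a function nat -> nat -> C of which only the entries
   with indices < d matter.  A superoperator from dimension a to b is given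
   by its coefficients: (S i j k l) is the (i,j) entry of the image of |k><l|. *)
Definition Mat := nat -> nat -> C.
Definition Superop := nat -> nat -> nat -> nat -> C.

Definition so_apply (a : nat) (S : Superop) (X : Mat) : Mat :=
  fun i j => csum a (fun k => csum a (fun l => Cmul (S i j k l) (X k l))).

(* Tensor product convention: H (dim a) (x) K (dim k) has basis index i*k+p
   (i < a, p < k).  (S (x) I_K)(X), for S from dim a to dim b. *)
Definition so_tensor_id_apply (a k : nat) (S : Superop) (X : Mat) : Mat :=
  fun I J => csum a (fun i2 => csum a (fun j2 =>
     Cmul (S (I / k)%nat (J / k)%nat i2 j2)
          (X (i2 * k + I mod k)%nat (j2 * k + J mod k)%nat))).

Definition Mtrace (d : nat) (X : Mat) : C := csum d (fun i => X i i).
Definition tr_prod (d : nat) (M X : Mat) : C :=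
  csum d (fun i => csum d (fun j => Cmul (M i j) (X j i))).

Definition quad (d : nat) (X : Mat) (v : nat -> C) : C :=
  csum d (fun i => csum d (fun j => Cmul (Cmul (Cconj (v i)) (X i j)) (v j))).

Definition PSD (d : nat) (X : Mat) : Prop :=
  forall v : nat -> C, Cim (quad d X v) = 0 /\ 0 <= Cre (quad d X v).

Definition is_state (d : nat) (rho : Mat) : Prop :=
  PSD d rho /\ Mtrace d rho = C1.

Definition is_channel (a b : nat) (S : Superop) : Prop :=
  (forall (k : nat) (X : Mat), PSD (a * k) X ->
       PSD (b * k) (so_tensor_id_apply a k S X)) /\
  (forall X : Mat, Mtrace b (so_apply a S X) = Mtrace a X).

Definition Msum_list (Ms : list Mat) : Mat :=
  fun i j => fold_right Cadd C0 (map (fun M => M i j) Ms).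
Definition is_povm (d : nat) (Ms : list Mat) : Prop :=
  Forall (PSD d) Ms /\
  (forall i j, (i < d)%nat -> (j < d)%nat ->
     Msum_list Ms i j = if Nat.eqb i j then C1 else C0).

Definition prob (d : nat) (M X : Mat) : R := Cre (tr_prod d M X).

(* J_p(delta) = sum_y delta(y)^2 / p(y)  (terms with p(y) = 0 are taken 0) *)
Fixpoint Jp (p dl : list R) : R :=
  match p, dl with
  | p0 :: p', d0 :: d' =>
      (if Rlt_dec 0 p0 then d0 ^ 2 / p0 else 0) + Jp p' d'
  | _, _ => 0
  end.

Record strategy : Type := mkStrat {
  s_dk : nat;              (* dim of auxiliary space K *)
  s_rho : Mat;             (* state on H_in (x) K *)
  s_psi1 : Superop;        (* channel on H_in (x) K *)
  s_psi : nat -> Superop   (* s_psi k, 2 <= k <= n : H_out (x) K -> H_in (x) K *)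
}.

Definition is_strategy (din dout n : nat) (s : strategy) : Prop :=
  is_state (din * s_dk s) (s_rho s) /\
  is_channel (din * s_dk s) (din * s_dk s) (s_psi1 s) /\
  (forall k, (2 <= k <= n)%nat ->
     is_channel (dout * s_dk s) (din * s_dk s) (s_psi s k)).

(* ((F m (x) I) o Psi_m) o ... o ((F 1 (x) I) o Psi_1) applied to rho *)
Fixpoint run (din dout : nat) (s : strategy) (F : nat -> Superop) (m : nat)
  : Mat :=
  match m with
  | O => s_rho s
  | S m' =>
      match m' with
      | O => so_tensor_id_apply din (s_dk s) (F 1%nat)
               (so_apply (din * s_dk s) (s_psi1 s) (s_rho s))
      | S _ => so_tensor_id_apply din (s_dk s) (F m)
               (so_apply (dout * s_dk s) (s_psi s m)
                  (run din dout s F m'))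
      end
  end.

Definition Phi_sharp (din dout : nat) (Phi : Superop) (s : strategy) (n : nat)
  : Mat := run din dout s (fun _ => Phi) n.

Definition Delta_sharp (din dout : nat) (Phi Delta : Superop) (s : strategy)
  (n : nat) : Mat :=
  fun a b => csum n (fun j0 =>
     run din dout s (fun m => if Nat.eqb m (S j0) then Delta else Phi) n a b).

Definition Jset (din dout : nat) (Phi Delta : Superop) (n : nat) (x : R)
  : Prop :=
  exists (s : strategy) (Ms : list Mat),
    is_strategy din dout n s /\ is_povm (dout * s_dk s) Ms /\
    x = Jp (map (fun M => prob (dout * s_dk s) M (Phi_sharp din dout Phi s n)) Ms)
           (map (fun M => prob (dout * s_dk s) M
                   (Delta_sharp din dout Phi Delta s n)) Ms).

Inductive ER : Type := ER_fin (r : R) | ER_pinf.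

Definition is_sup (S : R -> Prop) (s : ER) : Prop :=
  match s with
  | ER_fin r => is_lub S r
  | ER_pinf => forall M : R, exists x, S x /\ M < x
  end.

Definition ER_div_nat (s : ER) (n : nat) : ER :=
  match s with ER_fin r => ER_fin (r / INR n) | ER_pinf => ER_pinf end.

Definition ER_gt (a : ER) (M : R) : Prop :=
  match a with ER_fin r => M < r | ER_pinf => True end.

Definition ER_lim (a : nat -> ER) (g : ER) : Prop :=
  match g with
  | ER_fin l => forall eps, 0 < eps -> exists N, forall n, (N <= n)%nat ->
                  exists r, a n = ER_fin r /\ Rabs (r - l) < eps
  | ER_pinf => forall M, exists N, forall n, (N <= n)%nat -> ER_gt (a n) M
  end.

Definition Gmin_is (din dout : nat) (Phi Delta : Superop) (g : ER) : Prop :=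
  exists s : nat -> ER,
    (forall n, is_sup (Jset din dout Phi Delta n) (s n)) /\
    ER_lim (fun n => ER_div_nat (s n) n) g.

(* 1/g in [0, +oo], with 1/0 = +oo and 1/+oo = 0 *)
Definition ER_inv (g : ER) : ER :=
  match g with
  | ER_pinf => ER_fin 0
  | ER_fin r => if Rle_dec r 0 then ER_pinf else ER_fin (/ r)
  end.

Definition liminf_ge (x : nat -> R) (L : ER) : Prop :=
  forall c : R, ER_gt L c -> exists N, forall n, (N <= n)%nat -> c < x n.

Definition is_derivative_family (din dout : nat) (Phi Delta : R -> Superop)
  : Prop :=
  forall (i j k l : nat) (t : R),
    (i < dout)%nat -> (j < dout)%nat -> (k < din)%nat -> (l < din)%nat ->
    derivable_pt_lim (fun u => Cre (Phi u i j k l)) t (Cre (Delta t i j k l)) /\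
    derivable_pt_lim (fun u => Cim (Phi u i j k l)) t (Cim (Delta t i j k l)).

(* n-th element: n-step strategy and real-valued POVM (outcome, effect) *)
Definition estimator := nat -> (strategy * list (R * Mat)).

Definition is_estimator (din dout : nat) (est : estimator) : Prop :=
  forall n, (1 <= n)%nat ->
    is_strategy din dout n (fst (est n)) /\
    is_povm (dout * s_dk (fst (est n))) (map snd (snd (est n))).

Definition est_expect (din dout : nat) (Phi : R -> Superop) (est : estimator)
  (theta : R) (n : nat) (f : R -> R) : R :=
  let s := fst (est n) in
  rsum_list (map (fun yM => f (fst yM) *
      prob (dout * s_dk s) (snd yM) (Phi_sharp din dout (Phi theta) s n))
    (snd (est n))).

Definition asymp_unbiased (din dout : nat) (Phi : R -> Superop)
  (est : estimator) : Prop :=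
  forall theta : R,
    Un_cv (fun n => est_expect din dout Phi est theta n (fun y => y)) theta /\
    exists d : nat -> R,
      (forall n, derivable_pt_lim
         (fun t => est_expect din dout Phi est t n (fun y => y)) theta (d n)) /\
      Un_cv d 1.

(* Main.v *)
Require Import Defs.
From Stdlib Require Import Reals List.
Open Scope R_scope.
From Stdlib Require Import Lra Lia FunctionalExtensionality.
Import Defs.

Lemma Ceq (a b : C) : Cre a = Cre b -> Cim a = Cim b -> a = b.
Proof. destruct a, b; simpl; intros; subst; reflexivity. Qed.

Ltac cring := apply Ceq; simpl; cbv beta; ring.

Lemma Cadd_0_l a : Cadd C0 a = a. Proof. destruct a; cring. Qed.
Lemma Cadd_0_r a : Cadd a C0 = a. Proof. destruct a; cring. Qed.
Lemma Cadd_comm a b : Cadd a b = Cadd b a. Proof. cring. Qed.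
Lemma Cadd_assoc a b c : Cadd (Cadd a b) c = Cadd a (Cadd b c). Proof. cring. Qed.
Lemma Cmul_0_l a : Cmul C0 a = C0. Proof. cring. Qed.
Lemma Cmul_0_r a : Cmul a C0 = C0. Proof. cring. Qed.
Lemma Cmul_comm a b : Cmul a b = Cmul b a. Proof. cring. Qed.
Lemma Cmul_assoc a b c : Cmul (Cmul a b) c = Cmul a (Cmul b c). Proof. cring. Qed.
Lemma Cmul_add_l a b c : Cmul (Cadd a b) c = Cadd (Cmul a c) (Cmul b c). Proof. cring. Qed.
Lemma Cmul_add_r a b c : Cmul c (Cadd a b) = Cadd (Cmul c a) (Cmul c b). Proof. cring. Qed.
Lemma Cmul_1_l a : Cmul C1 a = a. Proof. destruct a; cring. Qed.
Lemma Cmul_1_r a : Cmul a C1 = a. Proof. destruct a; cring. Qed.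

Lemma csum_ext n f g : (forall i, (i < n)%nat -> f i = g i) -> csum n f = csum n g.
Proof. induction n; simpl; intros H; auto. rewrite IHn by (intros; apply H; lia). rewrite H by lia. auto. Qed.

Lemma csum_zero n f : (forall i, (i < n)%nat -> f i = C0) -> csum n f = C0.
Proof. induction n; simpl; intros H; auto. rewrite IHn by (intros; apply H; lia). rewrite H by lia. cring. Qed.

Lemma csum_add n f g : csum n (fun i => Cadd (f i) (g i)) = Cadd (csum n f) (csum n g).
Proof. induction n; simpl. cring. rewrite IHn. cring. Qed.

Lemma csum_mul_l n c f : Cmul c (csum n f) = csum n (fun i => Cmul c (f i)).
Proof. induction n; simpl. cring. rewrite <- IHn. cring. Qed.

Lemma csum_mul_r n c f : Cmul (csum n f) c = csum n (fun i => Cmul (f i) c).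
Proof. induction n; simpl. cring. rewrite <- IHn. cring. Qed.

Lemma csum_swap n m (f : nat -> nat -> C) :
  csum n (fun i => csum m (fun j => f i j)) = csum m (fun j => csum n (fun i => f i j)).
Proof.
  induction n; simpl. symmetry; apply csum_zero; auto.
  rewrite IHn. rewrite <- csum_add. reflexivity.
Qed.

Lemma csum_plus n m f : csum (n + m) f = Cadd (csum n f) (csum m (fun j => f (n + j)%nat)).
Proof. induction m; simpl. rewrite Nat.add_0_r; cring. rewrite Nat.add_succ_r; simpl. rewrite IHm. cring. Qed.

Lemma csum_prod a k f : csum (a * k) f = csum a (fun i => csum k (fun p => f (i * k + p)%nat)).
Proof.
  induction a; simpl. reflexivity.
  rewrite Nat.add_comm, csum_plus, IHa. f_equal.
Qed.

Lemma csum_delta n a f : (a < n)%nat -> csum n (fun i => if Nat.eqb i a then f i else C0) = f a.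
Proof.
  induction n; intros H; simpl. lia.
  destruct (Nat.eqb n a) eqn:E.
  - apply Nat.eqb_eq in E; subst. rewrite csum_zero. apply Cadd_0_l.
    intros i Hi. destruct (Nat.eqb i a) eqn:E2; auto. apply Nat.eqb_eq in E2; lia.
  - apply Nat.eqb_neq in E. rewrite IHn by lia. apply Cadd_0_r.
Qed.



Definition CD (f : R -> C) (v : C) (t : R) : Prop :=
  derivable_pt_lim (fun u => Cre (f u)) t (Cre v) /\
  derivable_pt_lim (fun u => Cim (f u)) t (Cim v).

Lemma CD_const c t : CD (fun _ => c) C0 t.
Proof. split; simpl; apply (derivable_pt_lim_const _ t). Qed.

Lemma CD_ext f v w t : v = w -> CD f v t -> CD f w t.
Proof. intros ->; auto. Qed.

Lemma CD_add f g v w t : CD f v t -> CD g w t -> CD (fun u => Cadd (f u) (g u)) (Cadd v w) t.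
Proof. intros [H1 H2] [H3 H4]; split; simpl.
  apply (derivable_pt_lim_plus (fun u => Cre (f u)) (fun u => Cre (g u))); auto.
  apply (derivable_pt_lim_plus (fun u => Cim (f u)) (fun u => Cim (g u))); auto. Qed.

Lemma dpl_mult f g x a b : derivable_pt_lim f x a -> derivable_pt_lim g x b ->
  derivable_pt_lim (fun u => f u * g u) x (a * g x + f x * b).
Proof. apply derivable_pt_lim_mult. Qed.
Lemma dpl_plus f g x a b : derivable_pt_lim f x a -> derivable_pt_lim g x b ->
  derivable_pt_lim (fun u => f u + g u) x (a + b).
Proof. apply derivable_pt_lim_plus. Qed.
Lemma dpl_minus f g x a b : derivable_pt_lim f x a -> derivable_pt_lim g x b ->
  derivable_pt_lim (fun u => f u - g u) x (a - b).
Proof. apply derivable_pt_lim_minus. Qed.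
Lemma dpl_val f x a b : a = b -> derivable_pt_lim f x a -> derivable_pt_lim f x b.
Proof. intros ->; auto. Qed.
Lemma dpl_const c x : derivable_pt_lim (fun _ => c) x 0.
Proof. apply derivable_pt_lim_const. Qed.
Lemma dpl_fext f g x a : (forall z, f z = g z) -> derivable_pt_lim f x a -> derivable_pt_lim g x a.
Proof. intros; eapply derivable_pt_lim_ext; eauto. Qed.

Lemma CD_fext f g v t : (forall u, f u = g u) -> CD f v t -> CD g v t.
Proof. intros E [H1 H2]; split; eapply dpl_fext; eauto; intros; simpl; rewrite E; auto. Qed.

Lemma CD_mul f g v w t : CD f v t -> CD g w t ->
  CD (fun u => Cmul (f u) (g u)) (Cadd (Cmul v (g t)) (Cmul (f t) w)) t.
Proof. intros [H1 H2] [H3 H4]; split; simpl.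
  - eapply dpl_val. 2: apply dpl_minus; apply dpl_mult; eauto. cbv beta; ring.
  - eapply dpl_val. 2: apply dpl_plus; apply dpl_mult; eauto. cbv beta; ring.
Qed.

Lemma CD_csum n (f : nat -> R -> C) (v : nat -> C) t :
  (forall i, (i < n)%nat -> CD (f i) (v i) t) ->
  CD (fun u => csum n (fun i => f i u)) (csum n v) t.
Proof.
  induction n; intros H; simpl. apply CD_const.
  apply CD_add. apply IHn; intros; apply H; lia. apply H; lia.
Qed.

Lemma CD_mul_const_l c f v t : CD f v t -> CD (fun u => Cmul c (f u)) (Cmul c v) t.
Proof. intros H. eapply CD_ext. 2: apply CD_mul; [apply CD_const|apply H]. cring. Qed.


Lemma csum_S n f : csum (S n) f = Cadd (csum n f) (f n). Proof. reflexivity. Qed.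

Section RunLemmas.
Variables (din dout : nat) (s : strategy).

Definition pdim (m : nat) : nat := match m with O => (din * s_dk s)%nat | S _ => (dout * s_dk s)%nat end.
Definition ppsi (m : nat) : Superop := match m with O => s_psi1 s | S _ => s_psi s (S m) end.

Lemma run_succ F m : run din dout s F (S m) =
  so_tensor_id_apply din (s_dk s) (F (S m)) (so_apply (pdim m) (ppsi m) (run din dout s F m)).
Proof. destruct m; reflexivity. Qed.

Lemma run_agree F G m : (forall k, (1 <= k <= m)%nat -> F k = G k) ->
  run din dout s F m = run din dout s G m.
Proof.
  induction m; intros H. reflexivity.
  rewrite !run_succ. rewrite IHm by (intros; apply H; lia). rewrite H by lia. reflexivity.
Qed.

Lemma so_apply_lin d S m (Xf : nat -> Mat) I J :
  csum m (fun j => so_apply d S (Xf j) I J) = so_apply d S (fun x y => csum m (fun j => Xf j x y)) I J.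
Proof.
  unfold so_apply. rewrite csum_swap. apply csum_ext; intros k _.
  rewrite csum_swap. apply csum_ext; intros l _. rewrite csum_mul_l. reflexivity.
Qed.

Lemma so_tensor_lin a k S m (Xf : nat -> Mat) I J :
  csum m (fun j => so_tensor_id_apply a k S (Xf j) I J) =
  so_tensor_id_apply a k S (fun x y => csum m (fun j => Xf j x y)) I J.
Proof.
  unfold so_tensor_id_apply. rewrite csum_swap. apply csum_ext; intros k' _.
  rewrite csum_swap. apply csum_ext; intros l _. rewrite csum_mul_l. reflexivity.
Qed.

Variables (Ft Dt : R -> Superop) (t : R).
Hypothesis HD : forall i j k l, (i < dout)%nat -> (j < dout)%nat -> (k < din)%nat -> (l < din)%nat ->
  CD (fun u => Ft u i j k l) (Dt t i j k l) t.
Hypothesis Hdk : s_dk s <> 0%nat.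

Lemma deriv_run m a b : (m = 0%nat \/ (a < dout * s_dk s /\ b < dout * s_dk s)%nat) ->
  CD (fun u => Phi_sharp din dout (Ft u) s m a b) (Delta_sharp din dout (Ft t) (Dt t) s m a b) t.
Proof.
  revert a b. induction m; intros a b Hab.
  - exact (CD_const (s_rho s a b) t).
  - destruct Hab as [Hab|[Ha Hb]]; [discriminate|].
    set (dk := s_dk s) in *.
    assert (Hprev : forall x y,
       CD (fun u => so_apply (pdim m) (ppsi m) (Phi_sharp din dout (Ft u) s m) x y)
          (so_apply (pdim m) (ppsi m) (Delta_sharp din dout (Ft t) (Dt t) s m) x y) t).
    { intros x y. unfold so_apply.
      apply CD_csum; intros k Hk. apply CD_csum; intros l Hl.
      apply CD_mul_const_l. apply IHm. destruct m; [left; reflexivity|right; simpl in *; lia]. }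
    unfold Phi_sharp.
    eapply CD_fext. { intros u. rewrite run_succ. reflexivity. }
    eapply CD_ext; [| 
      eapply (CD_csum din (fun i2 u => csum din (fun j2 => Cmul (Ft u (a / dk)%nat (b / dk)%nat i2 j2)
         (so_apply (pdim m) (ppsi m) (run din dout s (fun _ => Ft u) m) (i2 * dk + a mod dk)%nat (j2 * dk + b mod dk)%nat))))].
    2:{ intros i2 Hi2. apply CD_csum. intros j2 Hj2. apply CD_mul.
        - apply HD; auto. apply Nat.Div0.div_lt_upper_bound; lia. apply Nat.Div0.div_lt_upper_bound; lia.
        - apply Hprev. }
    unfold Delta_sharp at 2. rewrite csum_S.
    rewrite (run_succ _ m).
    rewrite (run_agree (fun k => if Nat.eqb k (S m) then Dt t else Ft t) (fun _ => Ft t) m)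
      by (intros k Hk; destruct (Nat.eqb k (S m)) eqn:E; auto; apply Nat.eqb_eq in E; lia).
    rewrite Nat.eqb_refl.
    rewrite (csum_ext m (fun j0 => run din dout s (fun k => if Nat.eqb k (S j0) then Dt t else Ft t) (S m) a b)
      (fun j0 => so_tensor_id_apply din dk (Ft t) (so_apply (pdim m) (ppsi m) (run din dout s (fun k => if Nat.eqb k (S j0) then Dt t else Ft t) m)) a b)).
    2:{ intros j0 Hj0. rewrite run_succ. cbv beta.
       replace (Nat.eqb (S m) (S j0)) with false by (symmetry; apply Nat.eqb_neq; lia); reflexivity. }
    rewrite so_tensor_lin. 
    unfold so_tensor_id_apply. rewrite Cadd_comm. etransitivity; [|apply csum_add]. apply csum_ext; intros i2 _.
    etransitivity; [|apply csum_add]. apply csum_ext; intros j2 _. fold dk.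
    f_equal. f_equal. unfold Delta_sharp. rewrite <- so_apply_lin. reflexivity.
Qed.
End RunLemmas.


Definition delta (a : nat) (x : C) : nat -> C := fun k => if Nat.eqb k a then x else C0.
Definition vadd (u v : nat -> C) : nat -> C := fun k => Cadd (u k) (v k).
Definition B (d : nat) (X : Mat) (u v : nat -> C) : C :=
  csum d (fun i => csum d (fun j => Cmul (Cmul (Cconj (u i)) (X i j)) (v j))).

Lemma quad_B d X v : quad d X v = B d X v v. Proof. reflexivity. Qed.

Lemma B_addl d X u1 u2 v : B d X (vadd u1 u2) v = Cadd (B d X u1 v) (B d X u2 v).
Proof. unfold B. rewrite <- csum_add. apply csum_ext; intros i _. rewrite <- csum_add.
  apply csum_ext; intros j _. unfold vadd. cring. Qed.
Lemma B_addr d X u v1 v2 : B d X u (vadd v1 v2) = Cadd (B d X u v1) (B d X u v2).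
Proof. unfold B. rewrite <- csum_add. apply csum_ext; intros i _. rewrite <- csum_add.
  apply csum_ext; intros j _. unfold vadd. cring. Qed.

Lemma csum_deltaR d b y h : (b < d)%nat -> csum d (fun j => Cmul (h j) (delta b y j)) = Cmul (h b) y.
Proof. intros Hb. rewrite <- (csum_delta d b (fun j => Cmul (h j) y)) by auto.
  apply csum_ext; intros j _. unfold delta. destruct (Nat.eqb j b); auto. apply Cmul_0_r. Qed.

Lemma csum_deltaL d a x h : (a < d)%nat -> csum d (fun i => Cmul (Cconj (delta a x i)) (h i)) = Cmul (Cconj x) (h a).
Proof. intros Ha. rewrite <- (csum_delta d a (fun i => Cmul (Cconj x) (h i))) by auto.
  apply csum_ext; intros j _. unfold delta. destruct (Nat.eqb j a); auto. cring. Qed.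

Lemma B_delta d X a x b y : (a < d)%nat -> (b < d)%nat ->
  B d X (delta a x) (delta b y) = Cmul (Cmul (Cconj x) (X a b)) y.
Proof. intros Ha Hb. unfold B.
  rewrite (csum_ext d _ (fun i => Cmul (Cconj (delta a x i)) (Cmul (X i b) y))).
  - rewrite csum_deltaL by auto. cring.
  - intros i _. rewrite csum_deltaR by auto. cring.
Qed.

Lemma B_deltal d X a x v : (a < d)%nat ->
  B d X (delta a x) v = Cmul (Cconj x) (csum d (fun j => Cmul (X a j) (v j))).
Proof. intros Ha. unfold B.
  rewrite (csum_ext d _ (fun i => Cmul (Cconj (delta a x i)) (csum d (fun j => Cmul (X i j) (v j))))).
  - rewrite csum_deltaL by auto. reflexivity.
  - intros i _. rewrite csum_mul_l. apply csum_ext; intros; cring.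
Qed.

Lemma B_deltar d X u b y : (b < d)%nat ->
  B d X u (delta b y) = Cmul (csum d (fun i => Cmul (Cconj (u i)) (X i b))) y.
Proof. intros Hb. unfold B. rewrite csum_mul_r. apply csum_ext; intros i _.
  rewrite csum_deltaR by auto. cring. Qed.

Lemma psd_diag d X a : PSD d X -> (a < d)%nat -> Cim (X a a) = 0 /\ 0 <= Cre (X a a).
Proof. intros H Ha. destruct (H (delta a C1)) as [H1 H2].
  rewrite quad_B, B_delta in H1, H2 by auto. simpl in *. split; lra. Qed.

Lemma psd_herm d X a b : PSD d X -> (a < d)%nat -> (b < d)%nat -> X b a = Cconj (X a b).
Proof.
  intros H Ha Hb. destruct (Nat.eq_dec a b) as [->|Hne].
  - destruct (psd_diag d X b H Hb). apply Ceq; simpl; lra.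
  - destruct (psd_diag d X a H Ha). destruct (psd_diag d X b H Hb).
    destruct (H (vadd (delta a C1) (delta b C1))) as [Q1 _].
    destruct (H (vadd (delta a C1) (delta b (mkC 0 1)))) as [Q2 _].
    rewrite quad_B, !B_addl, !B_addr, !B_delta in Q1, Q2 by auto.
    simpl in Q1, Q2. apply Ceq; simpl; lra.
Qed.


Lemma csum_re_nonneg n f : (forall i, (i < n)%nat -> 0 <= Cre (f i)) -> 0 <= Cre (csum n f).
Proof. induction n; intros H; simpl. lra. assert (0 <= Cre (f n)) by (apply H; lia).
  assert (0 <= Cre (csum n f)) by (apply IHn; intros; apply H; lia). lra. Qed.
Lemma csum_im_zero n f : (forall i, (i < n)%nat -> Cim (f i) = 0) -> Cim (csum n f) = 0.
Proof. induction n; intros H; simpl. lra. rewrite H by lia. rewrite IHn by (intros; apply H; lia). lra. Qed.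

Lemma Cre_Cadd x y : Cre (Cadd x y) = Cre x + Cre y. Proof. reflexivity. Qed.
Lemma Cre_scal r z : Cre (Cmul (mkC r 0) z) = r * Cre z. Proof. simpl; ring. Qed.

Lemma PSD_restrict d X : PSD (S d) X -> PSD d X.
Proof.
  intros H v. set (v' := fun i => if Nat.ltb i d then v i else C0).
  assert (E : quad (S d) X v' = quad d X v).
  { unfold quad. rewrite csum_S.
    rewrite (csum_zero (S d) (fun j => Cmul (Cmul (Cconj (v' d)) (X d j)) (v' j))).
    2:{ intros j _. unfold v'; cbv beta; rewrite Nat.ltb_irrefl. cring. }
    rewrite Cadd_0_r. apply csum_ext; intros i Hi. rewrite csum_S.
    replace (v' d) with C0 by (unfold v'; rewrite Nat.ltb_irrefl; reflexivity). rewrite Cmul_0_r, Cadd_0_r.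
    apply csum_ext; intros j Hj. unfold v'; cbv beta.
    replace (Nat.ltb i d) with true by (symmetry; apply Nat.ltb_lt; auto).
    replace (Nat.ltb j d) with true by (symmetry; apply Nat.ltb_lt; auto). reflexivity. }
  rewrite <- E. apply H.
Qed.

Definition Xe (e : R) (X : Mat) : Mat := fun i j => Cadd (X i j) (if Nat.eqb i j then mkC e 0 else C0).

Lemma quad_Xe d e X v : quad d (Xe e X) v =
  Cadd (quad d X v) (csum d (fun i => Cmul (mkC e 0) (Cmul (Cconj (v i)) (v i)))).
Proof.
  unfold quad. rewrite <- csum_add. apply csum_ext; intros i Hi.
  rewrite <- (csum_delta d i (fun j => Cmul (mkC e 0) (Cmul (Cconj (v j)) (v j)))) by auto.
  rewrite <- csum_add. apply csum_ext; intros j Hj. unfold Xe.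
  rewrite (Nat.eqb_sym j i). destruct (Nat.eqb i j) eqn:E.
  - apply Nat.eqb_eq in E; subst. cring.
  - cring.
Qed.

Lemma PSD_Xe d e X : 0 <= e -> PSD d X -> PSD d (Xe e X).
Proof.
  intros He H v. rewrite quad_Xe. destruct (H v) as [H1 H2].
  assert (Cim (csum d (fun i => Cmul (mkC e 0) (Cmul (Cconj (v i)) (v i)))) = 0)
    by (apply csum_im_zero; intros; simpl; ring).
  assert (0 <= Cre (csum d (fun i => Cmul (mkC e 0) (Cmul (Cconj (v i)) (v i)))))
    by (apply csum_re_nonneg; intros; simpl; destruct (v i) as [p q]; simpl; nra).
  simpl; split; lra.
Qed.

Lemma tr_Xe d e M X : tr_prod d M (Xe e X) = Cadd (tr_prod d M X) (Cmul (mkC e 0) (Mtrace d M)).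
Proof.
  unfold tr_prod, Mtrace. rewrite csum_mul_l, <- csum_add. apply csum_ext; intros i Hi.
  rewrite <- (csum_delta d i (fun j => Cmul (mkC e 0) (M j j))) by auto.
  rewrite <- csum_add. apply csum_ext; intros j Hj. unfold Xe.
  rewrite (Nat.eqb_sym j i). destruct (Nat.eqb i j) eqn:E.
  - apply Nat.eqb_eq in E; subst. cring.
  - cring.
Qed.

Lemma Mtrace_nonneg d M : PSD d M -> 0 <= Cre (Mtrace d M).
Proof. intros H. apply csum_re_nonneg; intros i Hi. apply (psd_diag d M i H Hi). Qed.

Section Schur.
Variables (d : nat) (Y : Mat) (a : R).
Hypothesis HY : PSD (S d) Y.
Hypothesis Ha : 0 < a.
Hypothesis Hdd : Y d d = mkC a 0.

Definition Ys : Mat := fun i j => Cadd (Y i j) (Cmul (mkC (- / a) 0) (Cmul (Y i d) (Y d j))).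

Lemma Ys_row j : Ys d j = C0.
Proof. unfold Ys. rewrite Hdd. apply Ceq; simpl; field; lra. Qed.
Lemma Ys_col i : Ys i d = C0.
Proof. unfold Ys. rewrite Hdd. apply Ceq; simpl; field; lra. Qed.

Lemma Ys_psd : PSD (S d) Ys.
Proof.
  intros v.
  set (r := csum (S d) (fun j => Cmul (Y d j) (v j))).
  set (l := csum (S d) (fun i => Cmul (Cconj (v i)) (Y i d))).
  set (beta := Cmul (mkC (- / a) 0) r).
  assert (E1 : quad (S d) Ys v = Cadd (quad (S d) Y v) (Cmul (mkC (- / a) 0) (Cmul l r))).
  { unfold quad. unfold l, r. rewrite csum_mul_r, csum_mul_l, <- csum_add.
    apply csum_ext; intros i _. rewrite csum_mul_l, csum_mul_l, <- csum_add.
    apply csum_ext; intros j _. unfold Ys. cring. }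
  assert (E2 : quad (S d) Y (vadd v (delta d beta)) =
     Cadd (Cadd (quad (S d) Y v) (Cmul l beta)) (Cadd (Cmul (Cconj beta) r) (Cmul (Cmul (Cconj beta) (mkC a 0)) beta))).
  { rewrite quad_B, B_addl, !B_addr, B_delta by lia. rewrite B_deltal, B_deltar by lia.
    rewrite <- Hdd. fold l r. rewrite <- quad_B. reflexivity. }
  assert (E3 : quad (S d) Ys v = quad (S d) Y (vadd v (delta d beta))).
  { rewrite E1, E2. unfold beta. destruct l as [l1 l2], r as [r1 r2]. apply Ceq; simpl; field; lra. }
  rewrite E3. apply HY.
Qed.

Lemma tr_Ys M : tr_prod (S d) M Y =
  Cadd (tr_prod (S d) M Ys) (Cmul (mkC (/ a) 0) (quad (S d) M (fun j => Y j d))).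
Proof.
  unfold tr_prod, quad. rewrite csum_mul_l, <- csum_add. apply csum_ext; intros i Hi.
  rewrite csum_mul_l, <- csum_add. apply csum_ext; intros j Hj.
  rewrite <- (psd_herm (S d) Y i d HY Hi) by lia. unfold Ys. cring.
Qed.

Lemma tr_Ys_restrict M : tr_prod (S d) M Ys = tr_prod d M Ys.
Proof.
  unfold tr_prod. rewrite csum_S. rewrite (csum_zero (S d) (fun j => Cmul (M d j) (Ys j d))).
  2:{ intros j _. rewrite Ys_col. apply Cmul_0_r. }
  rewrite Cadd_0_r. apply csum_ext; intros i _. rewrite csum_S, Ys_row, Cmul_0_r. apply Cadd_0_r.
Qed.
End Schur.


Theorem psd_tr d : forall M X, PSD d M -> PSD d X -> 0 <= Cre (tr_prod d M X).
Proof.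
  induction d; intros M X HM HX.
  - simpl. lra.
  - assert (Heps : forall e, 0 < e -> 0 <= Cre (tr_prod (S d) M X) + e * Cre (Mtrace (S d) M)).
    { intros e He. set (Y := Xe e X).
      assert (HY : PSD (S d) Y) by (apply PSD_Xe; auto; lra).
      destruct (psd_diag (S d) X d HX ltac:(lia)) as [Hi Hr].
      set (a := Cre (X d d) + e).
      assert (Hdd : Y d d = mkC a 0).
      { unfold Y, Xe, a. rewrite Nat.eqb_refl. apply Ceq; simpl; lra. }
      assert (E : Cre (tr_prod (S d) M Y) = Cre (tr_prod (S d) M X) + e * Cre (Mtrace (S d) M)).
      { unfold Y. rewrite tr_Xe. simpl. ring. }
      assert (Hap : 0 < a) by (unfold a; lra).
      rewrite <- E. rewrite (tr_Ys d Y a HY M), (tr_Ys_restrict d Y a Hap Hdd M).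
      destruct (HM (fun j => Y j d)) as [Q1 Q2].
      set (q := quad (S d) M (fun j => Y j d)) in *.
      set (tt := tr_prod d M (Ys d Y a)).
      rewrite Cre_Cadd, Cre_scal.
      assert (0 <= Cre tt).
      { apply IHd. apply PSD_restrict; auto. apply PSD_restrict. apply Ys_psd; auto. }
      assert (0 < / a) by (apply Rinv_0_lt_compat; unfold a; lra).
      nra. }
    assert (T := Mtrace_nonneg _ _ HM).
    destruct (Rle_or_lt 0 (Cre (tr_prod (S d) M X))) as [|Hneg]; auto.
    set (c := - Cre (tr_prod (S d) M X)).
    specialize (Heps (c / (2 * (Cre (Mtrace (S d) M) + 1)))).
    assert (0 < c / (2 * (Cre (Mtrace (S d) M) + 1))) by (apply Rdiv_lt_0_compat; unfold c; lra).
    specialize (Heps H).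
    assert (c / (2 * (Cre (Mtrace (S d) M) + 1)) * Cre (Mtrace (S d) M) <= c / 2).
    { unfold Rdiv. rewrite Rinv_mult. 
      assert (0 < / (Cre (Mtrace (S d) M) + 1)) by (apply Rinv_0_lt_compat; lra).
      assert (/ (Cre (Mtrace (S d) M) + 1) * Cre (Mtrace (S d) M) <= 1).
      { apply (Rmult_le_reg_l (Cre (Mtrace (S d) M) + 1)). lra.
        rewrite <- Rmult_assoc, Rinv_r by lra. lra. }
      unfold c in *. nra. }
    unfold c in *; lra.
Qed.


Lemma tensor1 a S X : so_tensor_id_apply a 1 S X = so_apply a S X.
Proof.
  apply functional_extensionality; intro I; apply functional_extensionality; intro J.
  unfold so_tensor_id_apply, so_apply. rewrite !Nat.div_1_r, !Nat.mod_1_r.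
  apply csum_ext; intros i _; apply csum_ext; intros j _. rewrite !Nat.mul_1_r, !Nat.add_0_r. reflexivity.
Qed.

Lemma chan_psd a b S X : is_channel a b S -> PSD a X -> PSD b (so_apply a S X).
Proof.
  intros [HCP _] HX. rewrite <- tensor1. rewrite <- (Nat.mul_1_r b). apply HCP.
  rewrite Nat.mul_1_r. auto.
Qed.

Lemma tensor_TP a b k S X : is_channel a b S ->
  Mtrace (b * k) (so_tensor_id_apply a k S X) = Mtrace (a * k) X.
Proof.
  intros [_ HTP]. unfold Mtrace. rewrite !csum_prod.
  set (Y := fun p : nat => fun u v : nat => X (u * k + p)%nat (v * k + p)%nat).
  rewrite (csum_ext b _ (fun i => csum k (fun p => so_apply a S (Y p) i i))).
  2:{ intros i Hi. apply csum_ext; intros p Hp. unfold so_tensor_id_apply, so_apply, Y.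
      assert (Hk : k <> 0%nat) by lia.
      assert (E1 : ((i * k + p) / k = i)%nat).
      { rewrite Nat.div_add_l by auto. rewrite Nat.div_small by auto. lia. }
      assert (E2 : ((i * k + p) mod k = p)%nat).
      { rewrite Nat.add_comm, Nat.Div0.mod_add. apply Nat.mod_small; auto. }
      rewrite E1, E2. reflexivity. }
  rewrite csum_swap. rewrite (csum_swap a k).
  apply csum_ext; intros p _. exact (HTP (Y p)).
Qed.

Section RunOk.
Variables (din dout n : nat) (s : strategy) (Phi : Superop).
Hypothesis Hs : is_strategy din dout n s.
Hypothesis HPhi : is_channel din dout Phi.

Lemma ppsi_chan m : (S m <= n)%nat -> is_channel (pdim din dout s m) (din * s_dk s) (ppsi s m).
Proof.
  destruct Hs as [_ [H1 H2]]. intros Hm. destruct m; simpl; auto. apply H2. lia.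
Qed.

Lemma run_ok m : (m <= n)%nat ->
  PSD (pdim din dout s m) (run din dout s (fun _ => Phi) m) /\
  Mtrace (pdim din dout s m) (run din dout s (fun _ => Phi) m) = C1.
Proof.
  induction m; intros Hm.
  - destruct Hs as [[H1 H2] _]. simpl. auto.
  - destruct (IHm ltac:(lia)) as [IH1 IH2].
    assert (Hc := ppsi_chan m Hm).
    rewrite run_succ. change (pdim din dout s (S m)) with (dout * s_dk s)%nat. split.
    + apply (proj1 HPhi). apply (chan_psd _ _ _ _ Hc IH1).
    + rewrite tensor_TP by auto. rewrite (proj2 Hc). auto.
Qed.
End RunOk.


Lemma Rdiv_le_0_compat a b : 0 <= a -> 0 < b -> 0 <= a / b.
Proof. intros; unfold Rdiv; apply Rmult_le_pos; [auto| left; apply Rinv_0_lt_compat; auto]. Qed.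

Lemma dpl_rsum {A : Type} (l : list A) (f : A -> R -> R) (g : A -> R) x :
  (forall a, In a l -> derivable_pt_lim (f a) x (g a)) ->
  derivable_pt_lim (fun t => rsum_list (map (fun a => f a t) l)) x (rsum_list (map g l)).
Proof.
  induction l as [|a l IH]; intros H; simpl.
  - apply dpl_const.
  - apply dpl_plus. apply H; left; auto. apply IH; intros; apply H; right; auto.
Qed.

Lemma dpl_min f x l : (forall t, 0 <= f t) -> f x = 0 -> derivable_pt_lim f x l -> l = 0.
Proof.
  intros Hpos H0 Hd.
  destruct (Rtotal_order l 0) as [Hl|[Hl|Hl]]; auto; exfalso.
  - destruct (Hd (- l / 2)) as [del Hdel]. lra.
    assert (Hdp := cond_pos del).
    specialize (Hdel (del / 2)). 
    assert (Hh : del / 2 <> 0) by lra.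
    assert (Ha : Rabs (del / 2) < del) by (rewrite Rabs_pos_eq; lra).
    specialize (Hdel Hh Ha). rewrite H0 in Hdel.
    assert (0 <= f (x + del / 2) / (del / 2)).
    { apply Rdiv_le_0_compat; auto; lra. }
    apply Rabs_def2 in Hdel. lra.
  - destruct (Hd (l / 2)) as [del Hdel]. lra.
    assert (Hdp := cond_pos del).
    specialize (Hdel (- (del / 2))).
    assert (Hh : - (del / 2) <> 0) by lra.
    assert (Ha : Rabs (- (del / 2)) < del) by (rewrite Rabs_Ropp, Rabs_pos_eq; lra).
    specialize (Hdel Hh Ha). rewrite H0 in Hdel.
    assert (f (x + - (del / 2)) / (- (del / 2)) <= 0).
    { unfold Rdiv. rewrite Rinv_opp.
      assert (0 < / (del/2)) by (apply Rinv_0_lt_compat; lra).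
      specialize (Hpos (x + - (del / 2))). nra. }
    apply Rabs_def2 in Hdel. lra.
Qed.

Lemma CS_aux (l : list (R * Mat)) (y0 : R) (P D : Mat -> R) t :
  (forall x, In x l -> 0 <= P (snd x)) ->
  (forall x, In x l -> P (snd x) = 0 -> D (snd x) = 0) ->
  0 <= t ^ 2 * rsum_list (map (fun x => (fst x - y0) ^ 2 * P (snd x)) l)
       - 2 * t * rsum_list (map (fun x => (fst x - y0) * D (snd x)) l)
       + Jp (map (fun x => P (snd x)) l) (map (fun x => D (snd x)) l).
Proof.
  induction l as [|[y M] l IH]; intros H1 H2; simpl. lra.
  assert (IH' := IH (fun x Hx => H1 x (or_intror Hx)) (fun x Hx => H2 x (or_intror Hx))).
  assert (HP := H1 (y, M) (or_introl eq_refl)). simpl in HP.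
  assert (HD := H2 (y, M) (or_introl eq_refl)). simpl in HD.
  destruct (Rlt_dec 0 (P M)) as [Hp|Hp].
  - set (w := D M / P M).
    assert (E : D M = P M * w) by (unfold w; field; lra).
    assert (0 <= P M * (t * (y - y0) - w) ^ 2) by (apply Rmult_le_pos; [lra| apply pow2_ge_0]).
    assert (E2 : D M ^ 2 / P M = P M * w ^ 2) by (rewrite E; field; lra).
    replace (D M * (D M * 1) / P M) with (P M * w ^ 2) by (rewrite E; field; lra). rewrite E.
    assert (X1 : P M * (t * (y - y0) - w) ^ 2 = t * (t * 1) * ((y - y0) * ((y - y0) * 1) * P M) - 2 * t * ((y - y0) * (P M * w)) + P M * w ^ 2) by ring.
    simpl in IH'. lra.
  - assert (P M = 0) by lra. rewrite HD by auto. rewrite H. simpl in IH'. lra.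
Qed.

Lemma discr A B C : 0 <= A -> (forall t, 0 <= t ^ 2 * A - 2 * t * B + C) -> B ^ 2 <= A * C.
Proof.
  intros HA H. destruct (Req_dec A 0) as [HA0|HA0].
  - subst. destruct (Req_dec B 0) as [->|HB]. nra.
    specialize (H ((C + 1) / (2 * B))).
    replace (2 * ((C + 1) / (2 * B)) * B) with (C + 1) in H by (field; auto). nra.
  - specialize (H (B / A)).
    replace ((B / A) ^ 2 * A - 2 * (B / A) * B + C) with (C - B ^ 2 / A) in H by (field; auto).
    assert (B ^ 2 / A <= C) by lra.
    apply (Rmult_le_reg_r (/ A)). apply Rinv_0_lt_compat; lra.
    replace (A * C * / A) with C by (field; auto). unfold Rdiv in *. lra.
Qed.

Lemma CS (l : list (R * Mat)) (y0 : R) (P D : Mat -> R) :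
  (forall x, In x l -> 0 <= P (snd x)) ->
  (forall x, In x l -> P (snd x) = 0 -> D (snd x) = 0) ->
  (rsum_list (map (fun x => (fst x - y0) * D (snd x)) l)) ^ 2 <=
  rsum_list (map (fun x => (fst x - y0) ^ 2 * P (snd x)) l) *
  Jp (map (fun x => P (snd x)) l) (map (fun x => D (snd x)) l).
Proof.
  intros H1 H2. apply discr.
  - clear H2. induction l as [|x l IH]. simpl; lra.
    assert (0 <= P (snd x)) by (apply H1; left; auto).
    assert (0 <= (fst x - y0) ^ 2) by apply pow2_ge_0.
    assert (0 <= rsum_list (map (fun x => (fst x - y0) ^ 2 * P (snd x)) l)) by (apply IH; intros; apply H1; right; auto).
    change (0 <= (fst x - y0) ^ 2 * P (snd x) + rsum_list (map (fun x => (fst x - y0) ^ 2 * P (snd x)) l)).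
    assert (0 <= (fst x - y0) ^ 2 * P (snd x)) by (apply Rmult_le_pos; auto).
    lra.
  - intros t. apply CS_aux; auto.
Qed.

Lemma Jp_nonneg (p q : list R) : 0 <= Jp p q.
Proof.
  revert q; induction p as [|a p IH]; intros [|b q]; simpl; try lra.
  destruct (Rlt_dec 0 a). assert (0 <= b ^ 2 / a) by (apply Rdiv_le_0_compat; [apply pow2_ge_0|lra]).
  specialize (IH q); lra. specialize (IH q); lra.
Qed.

Lemma rsum_center (l : list (R * Mat)) y0 (D : Mat -> R) :
  rsum_list (map (fun x => (fst x - y0) * D (snd x)) l) =
  rsum_list (map (fun x => fst x * D (snd x)) l) - y0 * rsum_list (map (fun x => D (snd x)) l).
Proof. induction l; simpl. ring. rewrite IHl. ring. Qed.

Lemma tr_prod_Msum d (Ms : list Mat) X :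
  Cre (tr_prod d (Msum_list Ms) X) = rsum_list (map (fun M => prob d M X) Ms).
Proof.
  induction Ms as [|M Ms IH]; simpl.
  - unfold tr_prod. rewrite csum_zero. reflexivity. intros i _. apply csum_zero. intros; cring.
  - rewrite <- IH. unfold prob. rewrite <- Cre_Cadd. f_equal.
    unfold tr_prod. rewrite <- csum_add. apply csum_ext; intros i _. rewrite <- csum_add.
    apply csum_ext; intros j _. unfold Msum_list. simpl. cring.
Qed.

Lemma povm_sum d Ms X : is_povm d Ms -> rsum_list (map (fun M => prob d M X) Ms) = Cre (Mtrace d X).
Proof.
  intros [_ H]. rewrite <- tr_prod_Msum. f_equal. unfold tr_prod, Mtrace.
  apply csum_ext; intros i Hi.
  rewrite (csum_ext d _ (fun j => if Nat.eqb j i then X j i else C0)).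
  apply (csum_delta d i (fun j => X j i)); auto.
  intros j Hj. rewrite H by auto. destruct (Nat.eqb i j) eqn:E.
  - apply Nat.eqb_eq in E; subst. rewrite Nat.eqb_refl. apply Cmul_1_l.
  - rewrite Nat.eqb_sym, E. apply Cmul_0_l.
Qed.


Section Main.
Variables (din dout : nat) (Phi Delta : R -> Superop) (theta0 : R) (est : estimator).
Hypothesis Hch : forall theta : R, is_channel din dout (Phi theta).
Hypothesis Hdiff : is_derivative_family din dout Phi Delta.
Hypothesis Hest : is_estimator din dout est.

Definition sn n := fst (est n).
Definition ln n := snd (est n).
Definition dd n := (dout * s_dk (sn n))%nat.
Definition Pf n t M := prob (dd n) M (Phi_sharp din dout (Phi t) (sn n) n).
Definition Df n M := prob (dd n) M (Delta_sharp din dout (Phi theta0) (Delta theta0) (sn n) n).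

Lemma dk_pos n : (1 <= n)%nat -> s_dk (sn n) <> 0%nat.
Proof.
  intros Hn E. destruct (Hest n Hn) as [[[_ Htr] _] _]. unfold sn in E. rewrite E in Htr.
  rewrite Nat.mul_0_r in Htr. simpl in Htr. injection Htr. lra.
Qed.

Lemma deriv_P n M : (1 <= n)%nat -> derivable_pt_lim (fun t => Pf n t M) theta0 (Df n M).
Proof.
  intros Hn.
  assert (H : CD (fun t => tr_prod (dd n) M (Phi_sharp din dout (Phi t) (sn n) n))
                 (tr_prod (dd n) M (Delta_sharp din dout (Phi theta0) (Delta theta0) (sn n) n)) theta0).
  { unfold tr_prod. apply CD_csum; intros i Hi. apply CD_csum; intros j Hj.
    apply CD_mul_const_l. apply deriv_run.
    - intros. apply Hdiff; auto.
    - apply dk_pos; auto.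
    - right. unfold dd in *. auto. }
  exact (proj1 H).
Qed.

Lemma povm_n n : (1 <= n)%nat -> is_povm (dd n) (map snd (ln n)).
Proof. intros Hn. apply (Hest n Hn). Qed.

Lemma runok_n n t : (1 <= n)%nat ->
  PSD (dd n) (Phi_sharp din dout (Phi t) (sn n) n) /\ Mtrace (dd n) (Phi_sharp din dout (Phi t) (sn n) n) = C1.
Proof.
  intros Hn. destruct n as [|n']. lia.
  assert (Hs : is_strategy din dout (S n') (sn (S n'))) by apply (Hest _ Hn).
  exact (run_ok din dout (S n') (sn (S n')) (Phi t) Hs (Hch t) (S n') (Nat.le_refl _)).
Qed.

Lemma P_nonneg n t x : (1 <= n)%nat -> In x (ln n) -> 0 <= Pf n t (snd x).
Proof.
  intros Hn Hx. destruct (povm_n n Hn) as [HF _]. rewrite Forall_forall in HF.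
  apply psd_tr. apply HF. apply in_map; auto. apply runok_n; auto.
Qed.

Lemma sumP n t : (1 <= n)%nat -> rsum_list (map (fun x => Pf n t (snd x)) (ln n)) = 1.
Proof.
  intros Hn. rewrite <- (map_map snd (fun M => Pf n t M)). unfold Pf.
  rewrite povm_sum by (apply povm_n; auto). rewrite (proj2 (runok_n n t Hn)). reflexivity.
Qed.

Lemma sumD n : (1 <= n)%nat -> rsum_list (map (fun x => Df n (snd x)) (ln n)) = 0.
Proof.
  intros Hn.
  assert (H := dpl_rsum (ln n) (fun x t => Pf n t (snd x)) (fun x => Df n (snd x)) theta0
     (fun x _ => deriv_P n (snd x) Hn)).
  assert (H2 : derivable_pt_lim (fun _ => 1) theta0 (rsum_list (map (fun x => Df n (snd x)) (ln n)))).
  { eapply dpl_fext; [|exact H]. intro t. cbv beta. apply sumP; auto. }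
  clear H. rename H2 into H. symmetry. eapply uniqueness_limite. apply dpl_const. exact H.
Qed.

Lemma Dzero n x : (1 <= n)%nat -> In x (ln n) -> Pf n theta0 (snd x) = 0 -> Df n (snd x) = 0.
Proof.
  intros Hn Hx H0. apply (dpl_min (fun t => Pf n t (snd x)) theta0); [| exact H0 | apply deriv_P; auto].
  intros t. apply P_nonneg; auto.
Qed.

Lemma Bn n dn : (1 <= n)%nat ->
  derivable_pt_lim (fun t => est_expect din dout Phi est t n (fun y => y)) theta0 dn ->
  dn = rsum_list (map (fun x => (fst x - theta0) * Df n (snd x)) (ln n)).
Proof.
  intros Hn Hd. rewrite rsum_center, sumD by auto. rewrite Rmult_0_r, Rminus_0_r.
  eapply uniqueness_limite. exact Hd.
  assert (H := dpl_rsum (ln n) (fun x t => fst x * Pf n t (snd x)) (fun x => fst x * Df n (snd x)) theta0).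
  apply H. intros x _. eapply dpl_val. 2: apply dpl_mult; [apply dpl_const | apply deriv_P; auto]. cbv beta; ring.
Qed.

Lemma Jin n : (1 <= n)%nat ->
  Jset din dout (Phi theta0) (Delta theta0) n
    (Jp (map (fun x => Pf n theta0 (snd x)) (ln n)) (map (fun x => Df n (snd x)) (ln n))).
Proof.
  intros Hn. exists (sn n), (map snd (ln n)). split. apply (Hest n Hn). split. apply povm_n; auto.
  rewrite !map_map. reflexivity.
Qed.

Lemma key n : (1 <= n)%nat -> forall dn,
  derivable_pt_lim (fun t => est_expect din dout Phi est t n (fun y => y)) theta0 dn ->
  0 <= est_expect din dout Phi est theta0 n (fun y => (y - theta0) ^ 2) /\
  exists J, Jset din dout (Phi theta0) (Delta theta0) n J /\
    dn ^ 2 <= est_expect din dout Phi est theta0 n (fun y => (y - theta0) ^ 2) * J.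
Proof.
  intros Hn dn Hd.
  change (est_expect din dout Phi est theta0 n (fun y => (y - theta0) ^ 2)) with
    (rsum_list (map (fun x => (fst x - theta0) ^ 2 * Pf n theta0 (snd x)) (ln n))).
  split.
  - clear Hd. assert (HH : forall x, In x (ln n) -> 0 <= Pf n theta0 (snd x)) by (intros; apply P_nonneg; auto).
    induction (ln n) as [|x l IH]. simpl; lra.
    change (0 <= (fst x - theta0) ^ 2 * Pf n theta0 (snd x) + rsum_list (map (fun x => (fst x - theta0) ^ 2 * Pf n theta0 (snd x)) l)).
    assert (0 <= (fst x - theta0) ^ 2 * Pf n theta0 (snd x)).
    { apply Rmult_le_pos. apply pow2_ge_0. apply HH; left; auto. }
    assert (0 <= rsum_list (map (fun x => (fst x - theta0) ^ 2 * Pf n theta0 (snd x)) l)).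
    { apply IH. intros; apply HH; right; auto. }
    lra.
  - eexists. split. apply Jin; auto.
    rewrite (Bn n dn Hn Hd). apply CS.
    + intros; apply P_nonneg; auto.
    + intros; apply Dzero; auto.
Qed.
End Main.


Theorem mainTheorem9 (din dout : nat) (Phi Delta : R -> Superop)
  (Hch : forall theta : R, is_channel din dout (Phi theta))
  (Hdiff : is_derivative_family din dout Phi Delta)
  (theta0 : R) (g : ER)
  (Hg : Gmin_is din dout (Phi theta0) (Delta theta0) g)
  (est : estimator)
  (Hest : is_estimator din dout est)
  (Hunb : asymp_unbiased din dout Phi est) :
  liminf_ge
    (fun n => INR n * est_expect din dout Phi est theta0 n
                        (fun y => (y - theta0) ^ 2))
    (ER_inv g).
Proof.
  destruct (Hunb theta0) as [_ [dfun [Hdf Hdcv]]].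
  destruct Hg as [sup [Hsup Hlim]].
  set (x := fun n => INR n * est_expect din dout Phi est theta0 n (fun y => (y - theta0) ^ 2)).
  assert (Hx0 : forall n, (1 <= n)%nat -> 0 <= x n).
  { intros n Hn. destruct (key din dout Phi Delta theta0 est Hch Hdiff Hest n Hn (dfun n) (Hdf n)) as [H _].
    unfold x. apply Rmult_le_pos; auto. apply pos_INR. }
  assert (Hmain : forall n q, (1 <= n)%nat -> ER_div_nat (sup n) n = ER_fin q -> dfun n ^ 2 <= x n * q).
  { intros n q Hn Hq. destruct (key din dout Phi Delta theta0 est Hch Hdiff Hest n Hn (dfun n) (Hdf n)) as [HA [J [HJ HCS]]].
    specialize (Hsup n). destruct (sup n) as [S|]; [|discriminate]. simpl in Hq. injection Hq as Hq.
    simpl in Hsup. destruct Hsup as [Hub _]. assert (HJS : J <= S) by (apply Hub; auto).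
    assert (HnR : 0 < INR n) by (apply lt_0_INR; lia).
    assert (ES : S = INR n * q) by (rewrite <- Hq; field; lra).
    unfold x. rewrite ES in HJS.
    set (A := est_expect din dout Phi est theta0 n (fun y => (y - theta0) ^ 2)) in *.
    assert (A * J <= A * (INR n * q)) by (apply Rmult_le_compat_l; auto).
    replace (INR n * A * q) with (A * (INR n * q)) by ring. lra. }
  change (liminf_ge x (ER_inv g)).
  destruct g as [r|].
  2:{ simpl. intros c Hc. exists 1%nat. intros n Hn. specialize (Hx0 n Hn). simpl in Hc. lra. }
  assert (Hq : forall eps, 0 < eps -> exists N, forall n, (N <= n)%nat ->
             exists q, ER_div_nat (sup n) n = ER_fin q /\ Rabs (q - r) < eps) by exact Hlim.
  unfold ER_inv. destruct (Rle_dec r 0) as [Hr|Hr].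
  - simpl. intros c _. set (c0 := Rabs c + 1).
    assert (Hc0 : 0 < c0) by (unfold c0; generalize (Rabs_pos c); lra).
    destruct (Hq (/ (4 * c0))) as [N1 HN1]. apply Rinv_0_lt_compat; lra.
    destruct (Hdcv (1/2)) as [N2 HN2]. lra.
    exists (1 + N1 + N2)%nat. intros n Hn.
    destruct (HN1 n ltac:(lia)) as [q [Eq Hqr]].
    specialize (HN2 n ltac:(lia)). unfold R_dist in HN2.
    assert (Hm := Hmain n q ltac:(lia) Eq). assert (Hxn := Hx0 n ltac:(lia)).
    apply Rabs_def2 in HN2. apply Rabs_def2 in Hqr.
    assert (Hd2 : 1/4 < dfun n ^ 2) by nra.
    assert (Hqd : q < / (4 * c0)) by lra.
    assert (Hxq : x n * q <= x n * / (4 * c0)) by (apply Rmult_le_compat_l; lra).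
    assert (Hcx : c0 < x n).
    { assert (E : x n * / (4 * c0) * (4 * c0) = x n) by (field; lra). nra. }
    assert (c <= Rabs c) by apply Rle_abs. unfold c0 in Hcx. lra.
  - simpl. intros c Hc. apply Rnot_le_lt in Hr.
    destruct (Rlt_or_le c 0) as [Hcn|Hcp].
    { exists 1%nat. intros n Hn. specialize (Hx0 n Hn). lra. }
    assert (Hcr : c * r < 1).
    { apply (Rmult_lt_compat_r r) in Hc; auto. rewrite Rinv_l in Hc by lra. lra. }
    set (eta := (1 - c * r) / (2 * (1 + c))).
    assert (Heta : 0 < eta) by (unfold eta; apply Rdiv_lt_0_compat; lra).
    assert (Heta2 : eta * (1 + c) = (1 - c * r) / 2) by (unfold eta; field; lra).
    assert (Heta1 : eta <= 1/2).
    { assert (eta * (1 + c) <= 1/2 * (1 + c)) by nra. nra. }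
    destruct (Hq eta Heta) as [N1 HN1].
    destruct (Hdcv (eta / 3)) as [N2 HN2]. lra.
    exists (1 + N1 + N2)%nat. intros n Hn.
    destruct (HN1 n ltac:(lia)) as [q [Eq Hqr]].
    specialize (HN2 n ltac:(lia)). unfold R_dist in HN2.
    assert (Hm := Hmain n q ltac:(lia) Eq). assert (Hxn := Hx0 n ltac:(lia)).
    apply Rabs_def2 in HN2. apply Rabs_def2 in Hqr.
    assert (Hd2 : 1 - eta < dfun n ^ 2) by nra.
    assert (Hxq : x n * q <= x n * (r + eta)) by (apply Rmult_le_compat_l; lra).
    destruct (Rlt_or_le c (x n)) as [|Hle]; auto. exfalso.
    assert (x n * (r + eta) <= c * (r + eta)) by (apply Rmult_le_compat_r; lra).
    nra.
Qed.
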